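(* Let $(M,g)$ be a four-dimensional oriented smooth Lorentzian manifold with Levi-Civita connection $\nabla$. Let (a) $K^\mu$ be a smooth vector field with values in $\mathrm{Herm}(2)$ satisfying $K^\mu\tilde K^\nu+K^\nu\tilde K^\mu=2g^{\mu\nu}e$ for all $\mu,\nu$ and $\nabla_\mu\pi_+(K^\mu)=0$; (b) $A_\mu$ and $C_\mu$ be smooth covector fields with values in $\mathfrak{u}(2)$ and $\mathfrak{su}(2)$ respectively; (c) $\Psi:M\to\mathrm{Mat}(2,\mathbb{C})$ be a smooth function. Suppose $$iK^\mu(\nabla_\mu\Psi-C_\mu\Psi+\Psi A_\mu)=0.$$ Then $$\big(\nabla_\mu(\Psi^\dagger iK^\mu\Psi)-[A_\mu,\Psi^\dagger iK^\mu\Psi]\big)-\Psi^\dagger\big(\nabla_\mu\pi_-(iK^\mu)-[C_\mu,\pi_-(iK^\mu)]\big)\Psi=0.$$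
   Context: Repeated indices are summed; Greek indices are raised/lowered with $g$. $e$ is the $2\times2$ identity matrix; $\mathrm{Herm}(2)$ = Hermitian $2\times2$ matrices; $\mathfrak{u}(2)$ = anti-Hermitian $2\times 2$ matrices; $\mathfrak{su}(2)$ = traceless elements of $\mathfrak{u}(2)$; $\dagger$ is the Hermitian conjugate. For $A\in\mathrm{Mat}(2,\mathbb{C})$: $\pi_+(A)=\tfrac12(\operatorname{tr}A)e$, $\pi_-(A)=A-\pi_+(A)$, $\tilde A=\pi_+(A)-\pi_-(A)$. Products of matrix-valued tensor fields are matrix products of components; the covariant derivative of a matrix-valued tensor field $V=v_a\sigma^a$ (Pauli basis $\sigma^0=e,\sigma^1,\sigma^2,\sigma^3$, complex tensor fields $v_a$) is $(\nabla v_a)\sigma^a$; on a matrix-valued function it is the ordinary derivative. *)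

(* Defs.v *)
From HB Require Import structures.
From mathcomp Require Import all_boot all_order all_algebra.
From mathcomp Require Import all_classical all_reals all_analysis.
From mathcomp Require Import complex.
Set Implicit Arguments. Unset Strict Implicit. Unset Printing Implicit Defensive.
Import Order.TTheory GRing.Theory Num.Theory.
Import numFieldNormedType.Exports.
Local Open Scope classical_set_scope.
Local Open Scope ring_scope.

(* A coordinate chart of the spacetime: points are row vectors of R^4,
   the manifold is modelled by an open set U of R^4. *)
Notation pt R := ('rV[R]_4).

Definition ebas (R : realType) (mu : 'I_4) : pt R := delta_mx 0 mu.

Definition pd (R : realType) (mu : 'I_4) (f : pt R -> R) : pt R -> R :=
  fun x => 'D_(ebas R mu) f x.

Definition iterpd (R : realType) (s : seq 'I_4) (f : pt R -> R) : pt R -> R :=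
  foldr (fun mu h => pd mu h) f s.

Definition smooth_on (R : realType) (U : set (pt R)) (f : pt R -> R) : Prop :=
  forall (s : seq 'I_4) (x : pt R), U x ->
    {for x, continuous (iterpd s f)} /\
    forall mu : 'I_4, derivable (iterpd s f) x (ebas R mu).

Notation cmx R := ('M[R[i]]_2).

Definition smoothM (R : realType) (U : set (pt R)) (F : pt R -> cmx R) : Prop :=
  forall i j : 'I_2,
    smooth_on U (fun x => complex.Re (F x i j)) /\ smooth_on U (fun x => complex.Im (F x i j)).

Definition pdM (R : realType) (mu : 'I_4) (F : pt R -> cmx R) : pt R -> cmx R :=
  fun x => \matrix_(i, j)
    Complex (pd mu (fun y => complex.Re (F y i j)) x) (pd mu (fun y => complex.Im (F y i j)) x).

Definition hconj (R : realType) (A : cmx R) : cmx R := (map_mx (@conjc R) A)^T.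

Definition herm2 (R : realType) (A : cmx R) : Prop := hconj A = A.
Definition aherm2 (R : realType) (A : cmx R) : Prop := hconj A = - A.
Definition in_su2 (R : realType) (A : cmx R) : Prop :=
  aherm2 A /\ \tr A = 0.

Definition pip (R : realType) (A : cmx R) : cmx R := (\tr A / 2%:R)%:M.
Definition pim (R : realType) (A : cmx R) : cmx R := A - pip A.
Definition tld (R : realType) (A : cmx R) : cmx R := pip A - pim A.

Definition imul (R : realType) (A : cmx R) : cmx R := (Complex 0 1) *: A.

Definition comm (R : realType) (A B : cmx R) : cmx R := A *m B - B *m A.

Definition rc (R : realType) (r : R) : R[i] := Complex r 0.

Definition lorentz_sig (R : realType) (G : 'M[R]_4) : Prop :=
  exists P : 'M[R]_4, P \in unitmx /\
    (P^T *m G *m P = diag_mx (\row_(k < 4) (if k == 0 then 1 else -1)) \/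
     P^T *m G *m P = diag_mx (\row_(k < 4) (if k == 0 then -1 else 1))).

Definition lorentzian_metric (R : realType) (U : set (pt R))
    (g : pt R -> 'M[R]_4) : Prop :=
  (forall mu nu, smooth_on U (fun x => g x mu nu)) /\
  (forall x, U x -> (g x)^T = g x /\ lorentz_sig (g x)).

Definition ginv (R : realType) (g : pt R -> 'M[R]_4) (x : pt R) : 'M[R]_4 :=
  invmx (g x).

Definition christoffel (R : realType) (g : pt R -> 'M[R]_4)
    (l mu nu : 'I_4) (x : pt R) : R :=
  2%:R^-1 * \sum_(s < 4) ginv g x l s *
    (pd mu (fun y => g y s nu) x + pd nu (fun y => g y s mu) x
     - pd s (fun y => g y mu nu) x).

(* Covariant divergence nabla_mu V^mu of a matrix-valued vector field V^mu
   (componentwise in the constant Pauli basis, i.e. entrywise):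
   nabla_mu V^mu = d_mu V^mu + Gamma^mu_{mu l} V^l. *)
Definition divM (R : realType) (g : pt R -> 'M[R]_4)
    (V : 'I_4 -> pt R -> cmx R) (x : pt R) : cmx R :=
  \sum_(mu < 4) pdM mu (V mu) x +
  \sum_(mu < 4) \sum_(l < 4) rc (christoffel g mu mu l x) *: V l x.

(* Main.v *)
Require Import Defs.
From HB Require Import structures.
From mathcomp Require Import all_boot all_order all_algebra.
From mathcomp Require Import all_classical all_reals all_analysis.
From mathcomp Require Import complex.
From mathcomp Require Import ring.
Import Order.TTheory GRing.Theory Num.Theory.
Import numFieldNormedType.Exports.
Local Open Scope classical_set_scope.
Local Open Scope ring_scope.
Set Implicit Arguments. Unset Strict Implicit.

Lemma ReD' {R : realType} (z w : R[i]) : complex.Re (z + w) = complex.Re z + complex.Re w.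
Proof. by case: z; case: w. Qed.
Lemma ImD' {R : realType} (z w : R[i]) : complex.Im (z + w) = complex.Im z + complex.Im w.
Proof. by case: z; case: w. Qed.
Lemma ReN' {R : realType} (z : R[i]) : complex.Re (- z) = - complex.Re z.
Proof. by case: z. Qed.
Lemma ImN' {R : realType} (z : R[i]) : complex.Im (- z) = - complex.Im z.
Proof. by case: z. Qed.
Lemma ReM' {R : realType} (z w : R[i]) :
  complex.Re (z * w) = complex.Re z * complex.Re w - complex.Im z * complex.Im w.
Proof. by case: z; case: w. Qed.
Lemma ImM' {R : realType} (z w : R[i]) :
  complex.Im (z * w) = complex.Re z * complex.Im w + complex.Im z * complex.Re w.
Proof. by case: z; case: w. Qed.
Lemma ReJ' {R : realType} (z : R[i]) : complex.Re (conjc z) = complex.Re z.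
Proof. by case: z. Qed.
Lemma ImJ' {R : realType} (z : R[i]) : complex.Im (conjc z) = - complex.Im z.
Proof. by case: z. Qed.

Definition CD (R : realType) (mu : 'I_4) (f : pt R -> R[i]) (x : pt R) (d : R[i]) :=
  is_derive x (ebas R mu) (fun y => complex.Re (f y)) (complex.Re d) /\
  is_derive x (ebas R mu) (fun y => complex.Im (f y)) (complex.Im d).
Arguments CD {R}.

Lemma CD_add {R : realType} mu (f g : pt R -> R[i]) x d1 d2 :
  CD mu f x d1 -> CD mu g x d2 -> CD mu (fun y => f y + g y) x (d1 + d2).
Proof.
move=> [h1 h2] [h3 h4]; split.
  have -> : (fun y => complex.Re (f y + g y)) =
     (fun y => complex.Re (f y)) + (fun y => complex.Re (g y)).
    by apply/funext => y; rewrite /= ReD'.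
  by rewrite ReD'; apply: is_deriveD.
have -> : (fun y => complex.Im (f y + g y)) =
   (fun y => complex.Im (f y)) + (fun y => complex.Im (g y)).
  by apply/funext => y; rewrite /= ImD'.
by rewrite ImD'; apply: is_deriveD.
Qed.

Lemma CD_opp {R : realType} mu (f : pt R -> R[i]) x d :
  CD mu f x d -> CD mu (fun y => - f y) x (- d).
Proof.
move=> [h1 h2]; split.
  have -> : (fun y => complex.Re (- f y)) = - (fun y => complex.Re (f y)).
    by apply/funext => y; rewrite /= ReN'.
  by rewrite ReN'; apply: is_deriveN.
have -> : (fun y => complex.Im (- f y)) = - (fun y => complex.Im (f y)).
  by apply/funext => y; rewrite /= ImN'.
by rewrite ImN'; apply: is_deriveN.
Qed.

Lemma CD_mul {R : realType} mu (f g : pt R -> R[i]) x d1 d2 :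
  CD mu f x d1 -> CD mu g x d2 -> CD mu (fun y => f y * g y) x (d1 * g x + f x * d2).
Proof.
move=> [h1 h2] [h3 h4]; split.
  have -> : (fun y => complex.Re (f y * g y)) =
     (fun y => complex.Re (f y)) * (fun y => complex.Re (g y)) -
     (fun y => complex.Im (f y)) * (fun y => complex.Im (g y)).
    by apply/funext => y; rewrite /= ReM'.
  apply: is_derive_eq.
  by rewrite ReD' !ReM' /= /GRing.scale /=; ring.
have -> : (fun y => complex.Im (f y * g y)) =
   (fun y => complex.Re (f y)) * (fun y => complex.Im (g y)) +
   (fun y => complex.Im (f y)) * (fun y => complex.Re (g y)).
  by apply/funext => y; rewrite /= ImM'.
apply: is_derive_eq.
by rewrite ImD' !ImM' /= /GRing.scale /=; ring.
Qed.

Lemma CD_conj {R : realType} mu (f : pt R -> R[i]) x d :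
  CD mu f x d -> CD mu (fun y => conjc (f y)) x (conjc d).
Proof.
move=> [h1 h2]; split.
  have -> : (fun y => complex.Re (conjc (f y))) = (fun y => complex.Re (f y)).
    by apply/funext => y; rewrite ReJ'.
  by rewrite ReJ'.
have -> : (fun y => complex.Im (conjc (f y))) = - (fun y => complex.Im (f y)).
  by apply/funext => y; rewrite /= ImJ'.
by rewrite ImJ'; apply: is_deriveN.
Qed.

Lemma CD_cst {R : realType} mu (c : R[i]) x : CD mu (fun _ : pt R => c) x 0.
Proof. by split; apply: is_derive_cst. Qed.
Lemma CD_ext {R : realType} mu (f g : pt R -> R[i]) x d d' :
  CD mu f x d -> (forall y, f y = g y) -> d = d' -> CD mu g x d'.
Proof. by move=> h /funext <- <-. Qed.

Lemma CD_sum {R : realType} mu (I : Type) (r : seq I) (f : I -> pt R -> R[i]) x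
  (d : I -> R[i]) : (forall k, CD mu (f k) x (d k)) ->
  CD mu (fun y => \sum_(k <- r) f k y) x (\sum_(k <- r) d k).
Proof.
move=> h; elim: r => [|a r IH].
  by apply: (CD_ext (CD_cst mu (0 : R[i]) x)) => [y|]; rewrite big_nil.
apply: (CD_ext (CD_add (h a) IH)) => [y|]; by rewrite big_cons.
Qed.

Definition MD (R : realType) (mu : 'I_4) (F : pt R -> cmx R) (x : pt R) (D : cmx R) :=
  forall i j, CD mu (fun y => F y i j) x (D i j).
Arguments MD {R}.

Lemma MD_pdM {R : realType} mu (F : pt R -> cmx R) x D :
  MD mu F x D -> pdM mu F x = D.
Proof.
move=> h; apply/matrixP => i j; rewrite mxE; case: (h i j) => h1 h2.
rewrite /pd !derive_val.
by case: (D i j).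
Qed.

Lemma MD_smooth {R : realType} U mu (F : pt R -> cmx R) x :
  smoothM U F -> U x -> MD mu F x (pdM mu F x).
Proof.
move=> hs Ux i j; case: (hs i j) => [h1 h2].
have [_ d1] := h1 [::] x Ux; have [_ d2] := h2 [::] x Ux.
rewrite mxE /=; split; exact: derivableP.
Qed.

Lemma MD_add {R : realType} mu (F G : pt R -> cmx R) x D1 D2 :
  MD mu F x D1 -> MD mu G x D2 -> MD mu (fun y => F y + G y) x (D1 + D2).
Proof.
move=> h1 h2 i j; apply: (CD_ext (CD_add (h1 i j) (h2 i j))) => [y|]; by rewrite mxE.
Qed.

Lemma MD_opp {R : realType} mu (F : pt R -> cmx R) x D :
  MD mu F x D -> MD mu (fun y => - F y) x (- D).
Proof.
move=> h i j; apply: (CD_ext (CD_opp (h i j))) => [y|]; by rewrite mxE.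
Qed.

Lemma MD_sub {R : realType} mu (F G : pt R -> cmx R) x D1 D2 :
  MD mu F x D1 -> MD mu G x D2 -> MD mu (fun y => F y - G y) x (D1 - D2).
Proof. by move=> h1 h2; apply: MD_add => //; apply: MD_opp. Qed.

Lemma MD_mul {R : realType} mu (F G : pt R -> cmx R) x D1 D2 :
  MD mu F x D1 -> MD mu G x D2 ->
  MD mu (fun y => F y *m G y) x (D1 *m G x + F x *m D2).
Proof.
move=> h1 h2 i j.
apply: (CD_ext (CD_sum (index_enum 'I_2)
   (fun k => CD_mul (h1 i k) (h2 k j)))) => [y|]; first by rewrite mxE.
by rewrite !mxE -big_split.
Qed.

Lemma MD_hconj {R : realType} mu (F : pt R -> cmx R) x D :
  MD mu F x D -> MD mu (fun y => hconj (F y)) x (hconj D).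
Proof.
move=> h i j; apply: (CD_ext (CD_conj (h j i))) => [y|]; by rewrite /hconj !mxE.
Qed.

Lemma MD_scale {R : realType} mu (c : R[i]) (F : pt R -> cmx R) x D :
  MD mu F x D -> MD mu (fun y => c *: F y) x (c *: D).
Proof.
move=> h i j; apply: (CD_ext (CD_mul (CD_cst mu c x) (h i j))) => [y|].
  by rewrite mxE.
by rewrite mxE mul0r add0r.
Qed.

Lemma MD_pip {R : realType} mu (F : pt R -> cmx R) x D :
  MD mu F x D -> MD mu (fun y => pip (F y)) x (pip D).
Proof.
move=> h i j.
have ht : CD mu (fun y => \tr (F y)) x (\tr D).
  exact: (CD_sum (index_enum 'I_2) (fun k => h k k)).
have hd := CD_mul ht (CD_cst mu (2%:R^-1) x).
rewrite /pip; case: (i == j) / eqP => [<-|ne].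
  apply: (CD_ext hd) => [y|]; first by rewrite mxE eqxx mulr1n.
  by rewrite mxE eqxx mulr1n mulr0 addr0.
apply: (CD_ext (CD_cst mu (0 : R[i]) x)) => [y|]; rewrite mxE; case: eqP => //.
Qed.

Lemma hconjM {R : realType} (X Y : cmx R) : hconj (X *m Y) = hconj Y *m hconj X.
Proof. by rewrite /hconj map_mxM trmx_mul. Qed.
Lemma hconjD {R : realType} (X Y : cmx R) : hconj (X + Y) = hconj X + hconj Y.
Proof. by apply/matrixP => i j; rewrite !mxE rmorphD. Qed.
Lemma hconjN {R : realType} (X : cmx R) : hconj (- X) = - hconj X.
Proof. by apply/matrixP => i j; rewrite !mxE rmorphN. Qed.
Lemma hconjB {R : realType} (X Y : cmx R) : hconj (X - Y) = hconj X - hconj Y.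
Proof. by rewrite hconjD hconjN. Qed.
Lemma hconjZ {R : realType} (c : R[i]) (X : cmx R) : hconj (c *: X) = conjc c *: hconj X.
Proof. by apply/matrixP => i j; rewrite !mxE rmorphM. Qed.
Lemma hconj_sum {R : realType} (I : Type) (r : seq I) (F : I -> cmx R) :
  hconj (\sum_(k <- r) F k) = \sum_(k <- r) hconj (F k).
Proof.
elim: r => [|a r IH]; first by rewrite !big_nil; apply/matrixP => i j; rewrite !mxE rmorph0.
by rewrite !big_cons hconjD IH.
Qed.
Lemma conj_i {R : realType} : conjc (Complex (0 : R) 1) = - Complex 0 1.
Proof. by rewrite /conjc /=; apply/eqP; rewrite eq_complex /= oppr0 !eqxx. Qed.

Lemma pipD {R : realType} (X Y : cmx R) : pip (X + Y) = pip X + pip Y.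
Proof. by rewrite /pip mxtraceD mulrDl raddfD. Qed.
Lemma pipZ {R : realType} (c : R[i]) (X : cmx R) : pip (c *: X) = c *: pip X.
Proof. by rewrite /pip mxtraceZ -mulrA scale_scalar_mx. Qed.
Lemma pip0 {R : realType} : pip (0 : cmx R) = 0.
Proof. by rewrite /pip linear0 mul0r raddf0. Qed.
Lemma pip_sum {R : realType} (I : Type) (r : seq I) (F : I -> cmx R) :
  pip (\sum_(k <- r) F k) = \sum_(k <- r) pip (F k).
Proof.
elim: r => [|a r IH]; first by rewrite !big_nil pip0.
by rewrite !big_cons pipD IH.
Qed.


Lemma mul2E {R : realType} (X Y : cmx R) i j :
  (X *m Y) i j = X i ord0 * Y ord0 j + X i ord_max * Y ord_max j.
Proof.
rewrite mxE big_ord_recl big_ord1.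
by have -> : lift ord0 ord0 = ord_max :> 'I_2 by apply: val_inj.
Qed.

Lemma core {R : realType} (P hP hP' P' K A C : cmx R) (c : R[i]) :
  hP' *m (c *: K) *m P + hP *m (c *: K) *m P'
  - comm A (hP *m (c *: K) *m P) + hP *m comm C (c *: K) *m P
  = - ((hP' - hP *m (- C) + (- A) *m hP) *m (- c *: K)) *m P
    + hP *m ((c *: K) *m (P' - C *m P + P *m A)).
Proof.
rewrite /comm; apply/matrixP => i j.
rewrite !(mul2E, mxE).
ring.
Qed.

Lemma comm_pim {R : realType} (C X : cmx R) : comm C (pim X) = comm C X.
Proof.
rewrite /comm /pim /pip mulmxBr mulmxBl scalar_mxC.
by rewrite opprB addrA addrNK.
Qed.

Lemma Lsum {R : realType} (I : Type) (r : seq I) (hP P : cmx R) (F : I -> cmx R) :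
  hP *m (\sum_(k <- r) F k) *m P = \sum_(k <- r) (hP *m F k *m P).
Proof. by rewrite mulmx_sumr mulmx_suml. Qed.

Lemma LZ {R : realType} (hP P X : cmx R) (a : R[i]) :
  hP *m (a *: X) *m P = a *: (hP *m X *m P).
Proof. by rewrite -scalemxAr -scalemxAl. Qed.

Lemma L5 {R : realType} (hP P X1 X2 X3 X4 X5 : cmx R) :
  hP *m (X1 - X2 + X3 - X4 - X5) *m P =
  hP *m X1 *m P - hP *m X2 *m P + hP *m X3 *m P - hP *m X4 *m P - hP *m X5 *m P.
Proof. by rewrite !(mulmxBr, mulmxBl, mulmxDr, mulmxDl, mulNmx). Qed.

Notation ci := (Complex 0 1).

Lemma hconj0 {R : realType} : hconj (0 : cmx R) = 0.
Proof. by apply/matrixP => i j; rewrite !mxE rmorph0. Qed.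

Lemma final_alg {R : realType} (S a1 a3 SA b2 b4 e : cmx R) :
  S - SA + e = 0 -> b2 + b4 = 0 ->
  (S + a1 + a3) - SA - (a1 - b2 + a3 - b4 - e) = 0.
Proof.
move=> /matrixP h1 /matrixP h2; apply/matrixP => i j.
have := h1 i j; have := h2 i j; rewrite !mxE => e2 e1.
transitivity ((S i j - SA i j + e i j) + (b2 i j + b4 i j)); first by ring.
by rewrite e1 e2 addr0.
Qed.

Unset Implicit Arguments.

Theorem theorem3 (R : realType) (U : set ('rV[R]_4))
  (g : 'rV[R]_4 -> 'M[R]_4)
  (K A C : 'I_4 -> 'rV[R]_4 -> 'M[R[i]]_2)
  (Psi : 'rV[R]_4 -> 'M[R[i]]_2) :
  open U ->
  lorentzian_metric U g ->
  (* (a) *)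
  (forall mu, smoothM U (K mu)) ->
  (forall mu x, U x -> herm2 (K mu x)) ->
  (forall mu nu x, U x ->
     K mu x *m tld (K nu x) + K nu x *m tld (K mu x)
     = (rc (ginv g x mu nu) *+ 2)%:M) ->
  (forall x, U x -> divM g (fun mu y => pip (K mu y)) x = 0) ->
  (* (b) *)
  (forall mu, smoothM U (A mu)) ->
  (forall mu, smoothM U (C mu)) ->
  (forall mu x, U x -> aherm2 (A mu x)) ->
  (forall mu x, U x -> in_su2 (C mu x)) ->
  (* (c) *)
  smoothM U Psi ->
  (forall x, U x ->
     \sum_(mu < 4) imul (K mu x) *m
        (pdM mu Psi x - C mu x *m Psi x + Psi x *m A mu x) = 0) ->
  forall x, U x ->
    (divM g (fun mu y => hconj (Psi y) *m imul (K mu y) *m Psi y) x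
     - \sum_(mu < 4) comm (A mu x) (hconj (Psi x) *m imul (K mu x) *m Psi x))
    - hconj (Psi x) *m
        (divM g (fun mu y => pim (imul (K mu y))) x
         - \sum_(mu < 4) comm (C mu x) (pim (imul (K mu x)))) *m Psi x
    = 0.
Proof.
move=> _ _ hK hKh _ hdiv _ _ hAh hCs hPsi hEq x Ux.
have MPsi mu := MD_smooth mu hPsi Ux.
have MK mu := MD_smooth mu (hK mu) Ux.
have EJ mu : pdM mu (fun y => hconj (Psi y) *m imul (K mu y) *m Psi y) x =
   (hconj (pdM mu Psi x) *m (ci *: K mu x) *m Psi x
    + hconj (Psi x) *m (ci *: K mu x) *m pdM mu Psi x)
   + hconj (Psi x) *m (ci *: pdM mu (K mu) x) *m Psi x.
  rewrite (MD_pdM (MD_mul (MD_mul (MD_hconj (MPsi mu)) (MD_scale ci (MK mu))) (MPsi mu))).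
  by rewrite mulmxDl addrAC.
have EPim mu : pdM mu (fun y => pim (imul (K mu y))) x =
   ci *: pdM mu (K mu) x - ci *: pip (pdM mu (K mu) x).
  rewrite (MD_pdM (MD_sub (MD_scale ci (MK mu)) (MD_pip (MD_scale ci (MK mu))))).
  by rewrite pipZ.
have EPip mu : pdM mu (fun y => pip (K mu y)) x = pip (pdM mu (K mu) x).
  by rewrite (MD_pdM (MD_pip (MK mu))).
set P := Psi x; set hP := hconj P.
have DJ : divM g (fun mu y => hconj (Psi y) *m imul (K mu y) *m Psi y) x =
  \sum_(mu < 4) (hconj (pdM mu Psi x) *m (ci *: K mu x) *m P
                 + hP *m (ci *: K mu x) *m pdM mu Psi x)
  + hP *m (\sum_(mu < 4) ci *: pdM mu (K mu) x) *m P
  + hP *m (\sum_(mu < 4) \sum_(l < 4) rc (christoffel g mu mu l x) *: (ci *: K l x)) *m P.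
  rewrite /divM (eq_bigr _ (fun mu _ => EJ mu)) big_split /= !Lsum.
  congr (_ + _).
  apply: eq_bigr => mu _; rewrite Lsum; apply: eq_bigr => l _.
  by rewrite LZ.
have DPim : divM g (fun mu y => pim (imul (K mu y))) x =
  \sum_(mu < 4) ci *: pdM mu (K mu) x
  - ci *: \sum_(mu < 4) pip (pdM mu (K mu) x)
  + \sum_(mu < 4) \sum_(l < 4) rc (christoffel g mu mu l x) *: (ci *: K l x)
  - ci *: \sum_(mu < 4) \sum_(l < 4) rc (christoffel g mu mu l x) *: pip (K l x).
  rewrite /divM (eq_bigr _ (fun mu _ => EPim mu)) sumrB -scaler_sumr.
  have -> : \sum_(mu < 4) \sum_(l < 4) rc (christoffel g mu mu l x) *: pim (imul (K l x))
    = \sum_(mu < 4) \sum_(l < 4) (rc (christoffel g mu mu l x) *: (ci *: K l x)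
         - ci *: (rc (christoffel g mu mu l x) *: pip (K l x))).
    apply: eq_bigr => mu _; apply: eq_bigr => l _.
    by rewrite /pim /imul pipZ scalerBr !scalerA mulrC.
  have -> : \sum_(mu < 4) \sum_(l < 4) (rc (christoffel g mu mu l x) *: (ci *: K l x)
         - ci *: (rc (christoffel g mu mu l x) *: pip (K l x)))
     = \sum_(mu < 4) (\sum_(l < 4) rc (christoffel g mu mu l x) *: (ci *: K l x)
         - ci *: \sum_(l < 4) (rc (christoffel g mu mu l x) *: pip (K l x))).
    by apply: eq_bigr => mu _; rewrite sumrB -scaler_sumr.
  rewrite sumrB -scaler_sumr addrA; congr (_ - _); by rewrite scaler_sumr.
have Dpip := hdiv x Ux.
rewrite /divM (eq_bigr _ (fun mu _ => EPip mu)) in Dpip.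
have DC : \sum_(mu < 4) comm (C mu x) (pim (imul (K mu x))) =
          \sum_(mu < 4) comm (C mu x) (ci *: K mu x).
  by apply: eq_bigr => mu _; rewrite comm_pim.
have core_sum :
  \sum_(mu < 4) (hconj (pdM mu Psi x) *m (ci *: K mu x) *m P
                 + hP *m (ci *: K mu x) *m pdM mu Psi x)
  - \sum_(mu < 4) comm (A mu x) (hP *m (ci *: K mu x) *m P)
  + hP *m (\sum_(mu < 4) comm (C mu x) (ci *: K mu x)) *m P = 0.
  rewrite Lsum -sumrB -big_split /=.
  rewrite (eq_bigr (fun mu => - hconj (ci *: K mu x *m (pdM mu Psi x - C mu x *m P + P *m A mu x)) *m P
       + hP *m (ci *: K mu x *m (pdM mu Psi x - C mu x *m P + P *m A mu x)))); last first.
    move=> mu _; rewrite core; congr (- _ *m _ + _).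
    have hk := hKh mu x Ux; have ha := hAh mu x Ux; have [hc _] := hCs mu x Ux.
    rewrite /herm2 in hk; rewrite /aherm2 in ha hc.
    by rewrite hconjM hconjZ conj_i hk !hconjD hconjN !hconjM ha hc.
  rewrite big_split /= -mulmx_suml -mulmx_sumr sumrN -hconj_sum.
  have := hEq x Ux; rewrite /imul => ->.
  by rewrite hconj0 oppr0 mul0mx mulmx0 addr0.
rewrite DJ DPim DC.
rewrite /imul L5.
apply: final_alg; first exact: core_sum.
rewrite -mulmxDl -mulmxDr -scalerDr Dpip.
by rewrite scaler0 mulmx0 mul0mx.
Qed.
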